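(* Let $p,q,r\ge1$ and $E$ be positive integers, $A\in[-E,E]^{p\times q}$ and $B\in[-E,E]^{q\times r}$ integer matrices, and set $A_{p,j}:=0$ for all $j$. Let the alphabet consist of pairwise distinct characters $x_0,\dots,x_{p-1},x_p^{(0)},\dots,x_p^{(r-1)},x_{p+1},\dots,x_{2p},y_0,\dots,y_{2p+q-1}$. For $\ell\in[0,r)$ let $X_\ell:=x_0\cdots x_{p-1}x_p^{(\ell)}x_{p+1}\cdots x_{2p}$ (length $2p+1$) and $Y:=y_0\cdots y_{2p+q-1}$. Let $D,F$ be positive integers with $E\ll D\ll F$, where $a\ll b$ means $a(|X_\ell|+|Y|)<b$. Define the weight function $w$ by: $w(\sigma,\varepsilon)=w(\varepsilon,\sigma)=F$ for every character $\sigma$; $w(x_i,y_{i+j})=F+A_{i,j}-A_{i+1,j}+(q-j)D$ for $i\in[0,p)$, $j\in[0,q)$; $w(x_p^{(\ell)},y_{p+j})=F+B_{j,\ell}$ for $j\in[0,q)$; $w(x_{p+i},y_{p+i+j})=F+(j+1)D$ for $i\in[1,p]$, $j\in[0,q)$; $w(\sigma,\sigma)=0$; and $w(\sigma,\rho)=2F$ for all other pairs. Then for every $\ell\in[0,r)$ and every $i\in[0,p)$, $$\mathrm{ed}^w\big(X_\ell[i\,.\,.\,|X_\ell|-i),Y\big)=|Y|\,F+(p-i)(q+1)D+\min_j\{A_{i,j}+B_{j,\ell}\},$$ and an optimal alignment deletes no characters of $X_\ell$.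
   Context: $X[a\,.\,.\,b)$ denotes the fragment $X[a]\cdots X[b-1]$. $\mathrm{ed}^w(X,Y)$ is the minimum total cost of an alignment of $X$ onto $Y$, i.e., of a monotone lattice path from $(0,0)$ to $(|X|,|Y|)$ with steps $(1,0)$ from $(x,y)$ (deleting $X[x]$, cost $w(X[x],\varepsilon)$), $(0,1)$ (inserting $Y[y]$, cost $w(\varepsilon,Y[y])$), and $(1,1)$ (aligning $X[x]$ to $Y[y]$, cost $w(X[x],Y[y])$). *)

(* Defs.v *)
From mathcomp Require Import all_boot all_order all_algebra.
Set Implicit Arguments. Unset Strict Implicit. Unset Printing Implicit Defensive.
Import Order.TTheory GRing.Theory Num.Theory.
Local Open Scope ring_scope.

(* a weight function on (char or epsilon) pairs; None = epsilon *)
Definition weight (C : Type) := option C -> option C -> int.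

(* one step of a monotone lattice path from (0,0) to (|X|,|Y|) *)
Inductive step := Del | Ins | Sub.   (* (1,0), (0,1), (1,1) *)

Definition isDel (s : step) : bool := if s is Del then true else false.

(* cost of an alignment (lattice path) of X onto Y; None if the step sequence
   is not a path from (0,0) to (|X|,|Y|) *)
Fixpoint acost (C : Type) (w : weight C) (X Y : seq C) (s : seq step)
  : option int :=
  match s, X, Y with
  | [::], [::], [::] => Some 0
  | Del :: s', x :: X', _ =>
      if acost w X' Y s' is Some c then Some (w (Some x) None + c) else None
  | Ins :: s', _, y :: Y' =>
      if acost w X Y' s' is Some c then Some (w None (Some y) + c) else None
  | Sub :: s', x :: X', y :: Y' =>
      if acost w X' Y' s' is Some c then Some (w (Some x) (Some y) + c) else None
  | _, _, _ => None
  end.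

Definition optimal_alignment (C : Type) (w : weight C) (X Y : seq C)
  (s : seq step) : Prop :=
  exists c, acost w X Y s = Some c /\
    forall s' c', acost w X Y s' = Some c' -> c <= c'.

Definition is_edw (C : Type) (w : weight C) (X Y : seq C) (d : int) : Prop :=
  (exists s, acost w X Y s = Some d) /\
  (forall s c, acost w X Y s = Some c -> d <= c).

Definition frag (C : Type) (X : seq C) (a b : nat) : seq C :=
  take (b - a) (drop a X).

(* alphabet: CX i = x_i (i <> p used), CXp l = x_p^(l), CY k = y_k;
   distinct constructors / indices give pairwise distinct characters *)
Inductive chr := CX of nat | CXp of nat | CY of nat.

(* entry of an integer matrix at nat indices, 0 outside the range
   (this realises the convention A_{p,j} := 0) *)
Definition mxget (m n : nat) (A : 'M[int]_(m, n)) (i j : nat) : int :=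
  match @insub nat (fun k => k < m)%N _ i, @insub nat (fun k => k < n)%N _ j with
  | Some i', Some j' => A i' j'
  | _, _ => 0
  end.

Definition Xs (p l : nat) : seq chr :=
  [seq CX k | k <- iota 0 p] ++ [:: CXp l] ++ [seq CX k | k <- iota p.+1 p].

Definition Ys (p q : nat) : seq chr := [seq CY k | k <- iota 0 (2 * p + q)].

Definition wchr (p q : nat) (A : 'M[int]_(p, q)) (r : nat)
  (B : 'M[int]_(q, r)) (D F : int) : weight chr :=
  fun a b =>
  match a, b with
  | None, None => 0
  | Some _, None => F
  | None, Some _ => F
  | Some (CX i), Some (CY k) =>
      if (i < p)%N && (i <= k)%N && (k < i + q)%N then
        let j := (k - i)%N in
        F + mxget A i j - mxget A i.+1 j + (q - j)%:R * D
      else if (p.+1 <= i)%N && (i <= 2 * p)%N && (i <= k)%N && (k < i + q)%N then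
        let j := (k - i)%N in F + (j.+1)%:R * D
      else 2 * F
  | Some (CXp l), Some (CY k) =>
      if (p <= k)%N && (k < p + q)%N then F + mxget B (k - p) l else 2 * F
  | Some (CX i), Some (CX i') => if i == i' then 0 else 2 * F
  | Some (CXp l), Some (CXp l') => if l == l' then 0 else 2 * F
  | Some (CY k), Some (CY k') => if k == k' then 0 else 2 * F
  | Some _, Some _ => 2 * F
  end.

Definition minAB (p q r : nat) (A : 'M[int]_(p, q)) (B : 'M[int]_(q, r))
  (i l : nat) : int :=
  \big[Order.min/(mxget A i 0 + mxget B 0 l)]_(j < q)
     (mxget A i j + mxget B j l).

(* Main.v *)
Require Import Defs.
From mathcomp Require Import all_boot all_order all_algebra zify ring lra.
Import Order.TTheory GRing.Theory Num.Theory.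
Local Open Scope ring_scope.

Lemma acost_lb (C : Type) (w : weight C) (X Y : seq C) (x0 : C)
  (L : nat -> nat -> int) :
  (forall a b, (a < size X)%N -> (b <= size Y)%N ->
     L a b <= w (Some (nth x0 X a)) None + L a.+1 b) ->
  (forall a b, (a <= size X)%N -> (b < size Y)%N ->
     L a b <= w None (Some (nth x0 Y b)) + L a b.+1) ->
  (forall a b, (a < size X)%N -> (b < size Y)%N ->
     L a b <= w (Some (nth x0 X a)) (Some (nth x0 Y b)) + L a.+1 b.+1) ->
  L (size X) (size Y) <= 0 ->
  forall s a b c, (a <= size X)%N -> (b <= size Y)%N ->
    acost w (drop a X) (drop b Y) s = Some c -> L a b <= c.
Proof.
move=> hD hI hS hE; elim=> [|st s IH] a b c ha hb.
  case hX: (drop a X) => [|x X']; case hY: (drop b Y) => [|y Y'] //= [<-].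
  have : size (drop a X) = 0%N by rewrite hX.
  have : size (drop b Y) = 0%N by rewrite hY.
  rewrite !size_drop => e1 e2.
  have -> : a = size X by lia.
  by have -> : b = size Y by lia.
case: st.
- case: (ltnP a (size X)) => ha'.
    rewrite (drop_nth x0 ha') /=.
    case E: (acost w (drop a.+1 X) (drop b Y) s) => [c'|] // [<-].
    have := IH _ _ _ ha' hb E; have := hD _ _ ha' hb; lia.
  by rewrite drop_oversize //=; case: (drop b Y).
- case: (ltnP b (size Y)) => hb'.
    rewrite (drop_nth x0 hb') /=.
    case E: (acost w (drop a X) (drop b.+1 Y) s) => [c'|]; last by case: (drop a X).
    case: (drop a X) => [|? ?] [<-];
    have := IH _ _ _ ha hb' E; have := hI _ _ ha hb'; lia.
  by rewrite (drop_oversize hb') /=; case: (drop a X).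
- case: (ltnP a (size X)) => ha'; last by rewrite drop_oversize //=; case: (drop b Y).
  case: (ltnP b (size Y)) => hb'; last by rewrite (drop_nth x0 ha') (drop_oversize hb').
  rewrite (drop_nth x0 ha') (drop_nth x0 hb') /=.
  case E: (acost w (drop a.+1 X) (drop b.+1 Y) s) => [c'|] // [<-].
  have := IH _ _ _ ha' hb' E; have := hS _ _ ha' hb'; lia.
Qed.

Lemma acost_ins_run (C : Type) (w : weight C) (X Y : seq C) (x0 : C)
  (L : nat -> nat -> int) a : forall m b s,
  (b + m <= size Y)%N ->
  (forall b', (b <= b')%N -> (b' < b + m)%N -> L a b' = w None (Some (nth x0 Y b')) + L a b'.+1) ->
  acost w (drop a X) (drop (b + m)%N Y) s = Some (L a (b + m)%N) ->
  acost w (drop a X) (drop b Y) (nseq m Ins ++ s) = Some (L a b).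
Proof.
elim=> [|m IH] b s hb hL hs; first by rewrite addn0 in hs.
have hb' : (b < size Y)%N by lia.
rewrite /= (drop_nth x0 hb') /= (IH b.+1) ?addSnnS //.
- rewrite (hL b) //; lia.
all: try by (move=> b' h1 h2; apply: hL; lia).
all: try lia.
all: by rewrite (hL b) //; lia.
Qed.

Lemma acost_sub_run (C : Type) (w : weight C) (X Y : seq C) (x0 : C)
  (L : nat -> nat -> int) : forall m a b s,
  (a + m <= size X)%N -> (b + m <= size Y)%N ->
  (forall u, (u < m)%N -> L (a + u)%N (b + u)%N =
     w (Some (nth x0 X (a + u)%N)) (Some (nth x0 Y (b + u)%N)) + L (a + u)%N.+1 (b + u)%N.+1) ->
  acost w (drop (a + m)%N X) (drop (b + m)%N Y) s = Some (L (a + m)%N (b + m)%N) ->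
  acost w (drop a X) (drop b Y) (nseq m Defs.Sub ++ s) = Some (L a b).
Proof.
elim=> [|m IH] a b s ha hb hL hs; first by rewrite !addn0 in hs.
have ha' : (a < size X)%N by lia.
have hb' : (b < size Y)%N by lia.
rewrite /= (drop_nth x0 ha') (drop_nth x0 hb') /= (IH a.+1 b.+1) ?addSnnS //.
all: try by (move=> u hu; have := hL u.+1 hu; by rewrite !addnS !addSn).
all: try lia.
all: by have := hL 0%N isT; rewrite !addn0 => ->.
Qed.

Definition cD (p q i t c : nat) : nat := ((p - t) * (q - c) + (p - i) * (c + 1))%N.
Definition cT (p i t c : nat) : nat := ((2 * p+1-i - t) * (c + 1))%N.
Definition cl (q t k : nat) : nat := minn (k - t) (q - 1).
Definition chx (p l t : nat) : chr := if t == p then CXp l else CX t.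

Lemma n1 p q i t c c' : (c < q -> c' <= c <= c'.+1 -> t < p -> i <= t ->
  cD p q i t c <= (q+2 * p+1) + cD p q i t.+1 c')%N.
Proof. rewrite /cD => *. nia. Qed.
Lemma n2 p q i c c' : (c < q -> c' <= c <= c'.+1 -> i < p ->
  cD p q i p c <= (q+2 * p+1) + cT p i p.+1 c')%N.
Proof. rewrite /cD /cT => *. nia. Qed.
Lemma n3 p q i t c c' : (c < q -> c' <= c <= c'.+1 -> p < t -> t < 2 * p+1-i ->
  cT p i t c <= (q+2 * p+1) + cT p i t.+1 c')%N.
Proof. rewrite /cT => *. nia. Qed.
Lemma n4 p q i t c : (c < q -> t < p -> cD p q i t c = (q - c) + cD p q i t.+1 c)%N.
Proof. rewrite /cD => *. nia. Qed.
Lemma n5 p q i c : (i < p -> cD p q i p c = cT p i p.+1 c)%N.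
Proof. rewrite /cD /cT => *. nia. Qed.
Lemma n6 p i t c : (t < 2 * p+1-i -> cT p i t c = c.+1 + cT p i t.+1 c)%N.
Proof. rewrite /cT => *. nia. Qed.
Lemma n7 p q i t c : (c.+1 < q -> i < t -> t <= p -> cD p q i t c < cD p q i t c.+1)%N.
Proof. rewrite /cD => *. nia. Qed.
Lemma n8 p q i c : (c < q -> i < p -> cD p q i i c = (p - i) * (q + 1))%N.
Proof. rewrite /cD => *. nia. Qed.
Lemma n9 p i t c : (cT p i t c <= cT p i t c.+1)%N.
Proof. rewrite /cT => *. nia. Qed.

Lemma lemulD (m n D : nat) : (m <= n)%N -> m%:Z * D%:Z <= n%:Z * D%:Z.
Proof. by move=> h; rewrite ler_wpM2r // lez_nat. Qed.

Lemma cl_lt q t k : (0 < q)%N -> (cl q t k < q)%N.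
Proof. rewrite /cl; lia. Qed.

Definition Hf p q r (A : 'M[int]_(p, q)) (B : 'M[int]_(q, r)) (i l D t k : nat) : int :=
  if (t <= p)%N then (cD p q i t (cl q t k))%:Z * D%:Z + mxget A t (cl q t k)
                      + mxget B (cl q t k) l
  else (cT p i t (cl q t k))%:Z * D%:Z.

Arguments Hf {p q r}.

Lemma mxget_out m n (M : 'M[int]_(m, n)) t c : ~~ (t < m)%N -> mxget M t c = 0.
Proof. by move=> h; rewrite /mxget insubN. Qed.

Lemma H_del p q r (A : 'M[int]_(p,q)) (B : 'M[int]_(q,r)) i l (D F : nat) (E : int) t k :
  (forall t c, -E <= mxget A t c <= E) -> (forall c, -E <= mxget B c l <= E) ->
  (0 < q)%N -> (i < p)%N ->
  (q+2 * p+1)%:Z * D%:Z + 4 * E < F%:Z -> (i <= t)%N -> (t < 2 * p+1-i)%N ->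
  Hf A B i l D t k <= F%:Z + Hf A B i l D t.+1 k.
Proof.
move=> hA hB hq hi hF h1 h2; rewrite /Hf.
have hc := cl_lt q t k hq.
have hcc : (cl q t.+1 k <= cl q t k <= (cl q t.+1 k).+1)%N by rewrite /cl; lia.
case: (ltngtP t p) => htp.
- 
  have := @lemulD _ _ D (@n1 _ _ _ _ _ _ hc hcc htp h1); rewrite PoszD mulrDl.
  have := hA t (cl q t k); have := hA t.+1 (cl q t.+1 k).
  have := hB (cl q t k); have := hB (cl q t.+1 k); lia.
- have := @lemulD _ _ D (@n3 _ _ _ _ _ _ hc hcc htp h2); rewrite PoszD mulrDl; have := hA 0%N 0%N; lia.
- rewrite htp in hc hcc *.
  have := @lemulD _ _ D (@n2 _ _ _ _ _ hc hcc hi); rewrite PoszD mulrDl.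
  have := hA p (cl q p k); have := hB (cl q p k); lia.
Qed.

Lemma H_sub p q r (A : 'M[int]_(p,q)) (B : 'M[int]_(q,r)) i l (D F : nat) (E : int) t k :
  (forall t c, -E <= mxget A t c <= E) -> (forall c, -E <= mxget B c l <= E) ->
  (0 < q)%N -> (i < p)%N ->
  (q+2 * p+1)%:Z * D%:Z + 4 * E < F%:Z -> (i <= t)%N -> (t < 2 * p+1-i)%N ->
  (Hf A B i l D t k + F%:Z <=
     wchr A B D%:Z F%:Z (Some (chx p l t)) (Some (CY k)) + Hf A B i l D t.+1 k.+1)
  /\ ((t <= k)%N -> (k < t + q)%N -> Hf A B i l D t k + F%:Z =
     wchr A B D%:Z F%:Z (Some (chx p l t)) (Some (CY k)) + Hf A B i l D t.+1 k.+1).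
Proof.
move=> hA hB hq hi hF h1 h2.
have ecl : cl q t.+1 k.+1 = cl q t k by rewrite /cl subSS.
have hc := cl_lt q t k hq.
have hcc : (cl q t k <= cl q t k <= (cl q t k).+1)%N by rewrite leqnn leqnSn.
have hE := hA 0%N 0%N.
rewrite /Hf ecl /chx /wchr.
case: (ltngtP t p) => htp.
- rewrite htp /=; case: ifP => hg.
  + have ec : cl q t k = (k - t)%N%N by move: hg; rewrite /cl; lia.
    have hkt : (k - t < q)%N by rewrite -ec.
    rewrite ec; set j := (k - t)%N in hkt *.
    have eqn : (cD p q i t j)%:Z * D%:Z + mxget A t j + mxget B j l + F%:Z =
      F%:Z + mxget A t j - mxget A t.+1 j + (q - j)%:R * D%:Z +
      ((cD p q i t.+1 j)%:Z * D%:Z + mxget A t.+1 j + mxget B j l).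
      by rewrite (@n4 p q i t j hkt htp) PoszD mulrDl natz; ring.
    by split; [rewrite eqn | move=> *; rewrite eqn].
  + case: ifP => hg2; first by lia.
    split; last by move=> h3 h4; rewrite h3 h4 in hg.
    have := @lemulD _ _ D (@n1 _ _ _ _ _ _ hc hcc htp h1); rewrite PoszD mulrDl.
    have := hA t (cl q t k); have := hA t.+1 (cl q t k); lia.
- have -> : (t < p)%N = false by lia.
  have -> : (p < t <= 2 * p)%N = true by lia.
  rewrite /=; case: ifP => hg.
  + have ec : cl q t k = (k - t)%N%N by move: hg; rewrite /cl; lia.
    rewrite ec; set j := (k - t)%N.
    have eqn : (cT p i t j)%:Z * D%:Z + F%:Z =
      F%:Z + j.+1%:R * D%:Z + (cT p i t.+1 j)%:Z * D%:Z.
      by rewrite (@n6 p i t j h2) PoszD mulrDl natz; ring.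
    by split; [rewrite eqn | move=> *; rewrite eqn].
  + split; last by move=> h3 h4; rewrite h3 h4 in hg.
    have := @lemulD _ _ D (@n3 _ _ _ _ _ _ hc hcc htp h2); rewrite PoszD mulrDl.
    lia.
- rewrite htp in hc hcc h1 h2 *.
  rewrite /= (@mxget_out _ _ A) ?ltnn //.
  case: ifP => hg.
  + have ec : cl q p k = (k - p)%N%N by move: hg; rewrite /cl; lia.
    rewrite ec; set j := (k - p)%N.
    have eqn : (cD p q i p j)%:Z * D%:Z + 0 + mxget B j l + F%:Z =
      F%:Z + mxget B j l + (cT p i p.+1 j)%:Z * D%:Z.
      by rewrite (@n5 p q i j hi); ring.
    by split; [rewrite eqn | move=> *; rewrite eqn].
  + split; last by move=> h3 h4; rewrite h3 h4 in hg.
    have := @lemulD _ _ D (@n2 _ _ _ _ _ hc hcc hi); rewrite PoszD mulrDl.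
    have := hB (cl q p k); lia.
Qed.

Lemma H_ins p q r (A : 'M[int]_(p,q)) (B : 'M[int]_(q,r)) i l (D : nat) (E : int) t k :
  (forall t c, -E <= mxget A t c <= E) -> (forall c, -E <= mxget B c l <= E) ->
  (0 < q)%N -> 4 * E < D%:Z -> (i < t)%N ->
  Hf A B i l D t k <= Hf A B i l D t k.+1.
Proof.
move=> hA hB hq hD ht.
case: (boolP (cl q t k.+1 == cl q t k)) => [/eqP e|ne]; first by rewrite /Hf e.
have e : cl q t k.+1 = (cl q t k).+1 by move: ne; rewrite /cl; lia.
have hlt : ((cl q t k).+1 < q)%N by rewrite -e cl_lt.
rewrite /Hf e; case: ifP => htp.
- have := @lemulD _ _ D (@n7 _ _ _ _ _ hlt ht htp).
  rewrite -addn1 PoszD mulrDl mul1r.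
  have := hA t (cl q t k); have := hA t (cl q t k).+1.
  have := hB (cl q t k); have := hB (cl q t k).+1; lia.
- exact: lemulD (n9 _ _ _ _).
Qed.

Lemma tgt_le p q r (A : 'M[int]_(p,q)) (B : 'M[int]_(q,r)) i l (D : nat) k :
  (0 < q)%N -> (i < p)%N ->
  ((p - i) * (q + 1))%:R * D%:Z + minAB A B i l <= Hf A B i l D i k.
Proof.
move=> hq hi; have hc := cl_lt q i k hq.
rewrite /Hf (ltnW hi) (@n8 _ _ _ _ hc hi) natz -addrA lerD2l.
rewrite /minAB.
have := bigmin_le (mxget A i 0 + mxget B 0 l) (Ordinal hc)
  (fun j : 'I_q => mxget A i j + mxget B j l).
by [].
Qed.

Lemma tgt_arg p q r (A : 'M[int]_(p,q)) (B : 'M[int]_(q,r)) i l :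
  (0 < q)%N -> exists j, (j < q)%N /\ minAB A B i l = mxget A i j + mxget B j l.
Proof.
move=> hq; rewrite /minAB.
apply: (big_ind (fun v => exists j, (j < q)%N /\ v = mxget A i j + mxget B j l)).
- by exists 0%N.
- move=> x y [j1 [h1 ->]] [j2 [h2 ->]].
  rewrite /Order.min; case: ifP => _; [by exists j1 | by exists j2].
- move=> j _; exists j; split=> //.
Qed.

Lemma size_Xs p l : size (Xs p l) = (2 * p + 1)%N.
Proof. rewrite /Xs size_cat /= !size_map !size_iota; lia. Qed.
Lemma size_Ys p q : size (Ys p q) = (2 * p + q)%N.
Proof. by rewrite /Ys size_map size_iota. Qed.
Lemma nth_Ys p q b : (b < 2 * p + q)%N -> nth (CX 0) (Ys p q) b = CY b.
Proof. by move=> h; rewrite /Ys (nth_map 0%N) ?size_iota // nth_iota. Qed.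
Lemma nth_Xs p l t : (t < 2 * p + 1)%N -> nth (CX 0) (Xs p l) t = chx p l t.
Proof.
move=> h; rewrite /Xs nth_cat size_map size_iota /chx.
case: ltnP => h1.
  rewrite (nth_map 0%N) ?size_iota // nth_iota //.
  by have -> : (t == p) = false by lia.
case: (eqVneq t p) => [->|ne]; first by rewrite subnn.
have -> : (t - p = (t - p.+1).+1)%N by lia.
rewrite /= (nth_map 0%N) ?size_iota; last by lia.
by rewrite nth_iota; [congr CX; lia | lia].
Qed.
Lemma size_frag p l i : (i < p)%N ->
  size (frag (Xs p l) i (size (Xs p l) - i)) = (2 * p + 1 - 2 * i)%N.
Proof. by move=> h; rewrite /frag size_take size_drop size_Xs; case: ifP; lia. Qed.
Lemma nth_frag p l i a : (i < p)%N -> (a < 2 * p + 1 - 2 * i)%N ->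
  nth (CX 0) (frag (Xs p l) i (size (Xs p l) - i)) a = chx p l (i + a).
Proof.
move=> h1 h2; rewrite /frag nth_take; last by rewrite size_Xs; lia.
by rewrite nth_drop nth_Xs //; lia.
Qed.
Lemma Hf_T p q r (A : 'M[int]_(p,q)) (B : 'M[int]_(q,r)) i l (D : nat) k :
  (i < p)%N -> Hf A B i l D (2 * p + 1 - i) k = 0.
Proof.
move=> h; rewrite /Hf; have -> : (2 * p + 1 - i <= p)%N = false by lia.
by rewrite /cT subnn mul0n.
Qed.

Theorem lemma6p1 (p q r E D F : nat)
  (A : 'M[int]_(p, q)) (B : 'M[int]_(q, r)) :
  (1 <= p)%N -> (1 <= q)%N -> (1 <= r)%N -> (1 <= E)%N ->
  (1 <= D)%N -> (1 <= F)%N ->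
  (forall i j, - (E%:Z) <= A i j <= E%:Z) ->
  (forall i j, - (E%:Z) <= B i j <= E%:Z) ->
  (E * (size (Xs p 0) + size (Ys p q)) < D)%N ->
  (D * (size (Xs p 0) + size (Ys p q)) < F)%N ->
  forall l i, (l < r)%N -> (i < p)%N ->
    let X := frag (Xs p l) i (size (Xs p l) - i) in
    let w := wchr A B D%:Z F%:Z in
    is_edw w X (Ys p q)
      ((size (Ys p q))%:R * F%:Z + ((p - i) * (q + 1))%:R * D%:Z
         + minAB A B i l)
    /\ exists s, optimal_alignment w X (Ys p q) s /\ ~~ has isDel s.
Proof.
move=> hp hq hr hE hD hF hA hB hED hDF l i hl hi X w.
rewrite size_Xs size_Ys in hED hDF.
have hAg : forall t c, - (E%:Z) <= mxget A t c <= E%:Z.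
  move=> t c; rewrite /mxget; case: (insub t : option 'I_p) => [t'|]; case: (insub c : option 'I_q) => [c'|] /=; try exact: hA; lia.
have hBg : forall c, - (E%:Z) <= mxget B c l <= E%:Z.
  move=> c; rewrite /mxget; case: (insub c : option 'I_q) => [c'|]; case: (insub l : option 'I_r) => [l'|] /=; try exact: hB; lia.
have hDE : 4 * E%:Z < D%:Z.
  have : (4 * E < D)%N by nia.
  lia.
have hFD : (q + 2 * p + 1)%N%:Z * D%:Z + 4 * E%:Z < F%:Z.
  have : ((q + 2 * p + 1) * D + 4 * E < F)%N by nia.
  lia.
pose K := (2 * p + q)%N.
pose T := (2 * p + 1 - i)%N.
pose tgt := ((p - i) * (q + 1))%:R * D%:Z + minAB A B i l.
pose G t k := if t == i then tgt else Hf A B i l D t k.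
pose L a b := (K - b)%N%:Z * F%:Z + G (i + a)%N b.
have hsX : size X = (2 * p + 1 - 2 * i)%N by rewrite size_frag.
have hnX : forall a, (a < size X)%N -> nth (CX 0) X a = chx p l (i + a).
  by move=> a; rewrite hsX => ha; rewrite nth_frag.
have hnY : forall b, (b < size (Ys p q))%N -> nth (CX 0) (Ys p q) b = CY b.
  by move=> b; rewrite size_Ys => hb; rewrite nth_Ys.
have KF : forall b, (b < K)%N -> (K - b)%N%:Z * F%:Z = F%:Z + (K - b.+1)%N%:Z * F%:Z.
  move=> b hb; have -> : (K - b = (K - b.+1).+1)%N by lia.
  by rewrite intS mulrDl mul1r.
have GH : forall t k, G t k <= Hf A B i l D t k.
  move=> t k; rewrite /G; case: eqP => [->|_] //; exact: tgt_le.
have GH' : forall t k, t != i -> G t k = Hf A B i l D t k.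
  by move=> t k /negbTE h; rewrite /G h.
have wF1 : forall c, w (Some c) None = F%:Z by case.
have wF2 : forall c, w None (Some c) = F%:Z by case.
have lb : forall s c, acost w X (Ys p q) s = Some c -> L 0%N 0%N <= c.
  move=> s c hs.
  apply: (@acost_lb _ w X (Ys p q) (CX 0) L _ _ _ _ s 0 0 c) => //; last by rewrite !drop0.
  - move=> a b ha hb; rewrite wF1 /L.
    have ne : (i + a.+1 != i)%N by rewrite addnS; apply/eqP; lia.
    rewrite (GH' _ _ ne) addnS.
    have := GH (i + a)%N b.
    have := @H_del p q r A B i l D F E%:Z (i + a)%N b hAg hBg hq hi hFD (leq_addr _ _) _.
    rewrite hsX in ha; have h : (i + a < 2 * p + 1 - i)%N by lia.
    move=> /(_ h); lia.
  - move=> a b ha hb; rewrite wF2 /L.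
    rewrite size_Ys in hb; rewrite (KF b hb).
    have : G (i + a)%N b <= G (i + a)%N b.+1.
      case: (eqVneq a 0%N) => [->|ne]; first by rewrite /G addn0 eqxx.
      have ne' : (i + a != i)%N by apply/eqP; lia.
      rewrite !(GH' _ _ ne'); apply: (@H_ins p q r A B i l D E%:Z (i + a)%N b hAg hBg hq hDE); lia.
    lia.
  - move=> a b ha hb; rewrite /L hnX // hnY //.
    rewrite size_Ys in hb; rewrite (KF b hb).
    have ne : (i + a.+1 != i)%N by rewrite addnS; apply/eqP; lia.
    rewrite (GH' _ _ ne) addnS.
    have := GH (i + a)%N b.
    rewrite hsX in ha; have h : (i + a < 2 * p + 1 - i)%N by lia.
    have [H1 _] := @H_sub p q r A B i l D F E%:Z (i + a)%N b hAg hBg hq hi hFD (leq_addr _ _) h.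
    move: H1; rewrite -/w; lia.
  - rewrite /L hsX size_Ys subnn.
    have -> : (i + (2 * p + 1 - 2 * i) = 2 * p + 1 - i)%N by lia.
    rewrite GH'; last by apply/eqP; lia.
    by rewrite Hf_T.
have [j [hj hjm]] := @tgt_arg p q r A B i l hq.
pose n := size X.
pose s := nseq (i + j) Ins ++ (nseq n Defs.Sub ++ (nseq (K - (i + j) - n) Ins ++ [::])).
have hs : acost w X (Ys p q) s = Some (L 0%N 0%N).
  rewrite -{1}(drop0 X) -(drop0 (Ys p q)).
  have e0 : (0 + (i + j) = i + j)%N by [].
  apply: (@acost_ins_run _ w X (Ys p q) (CX 0) L 0%N (i + j)%N 0%N).
  - rewrite size_Ys; lia.
  - move=> b' _ hb'; rewrite wF2 /L /G addn0 eqxx KF //; lia.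
  rewrite e0 -{1}(add0n n) -{1}(add0n (i + j)%N).
  apply: (@acost_sub_run _ w X (Ys p q) (CX 0) L n 0%N (i + j)%N).
  - by rewrite add0n.
  - rewrite size_Ys /n hsX; lia.
  - move=> u hu; rewrite add0n /L hnX; last by rewrite -/n; lia.
    rewrite hnY; last by rewrite size_Ys /n hsX in hu *; lia.
    rewrite /n hsX in hu.
    rewrite (KF (i + j + u)%N); last by lia.
    have ne : (i + u.+1 != i)%N by rewrite addnS; apply/eqP; lia.
    rewrite (GH' _ _ ne) addnS.
    have h : (i + u < 2 * p + 1 - i)%N by lia.
    have [_ H2] := @H_sub p q r A B i l D F E%:Z (i + u)%N (i + j + u)%N hAg hBg hq hi hFD (leq_addr _ _) h.
    have -> : G (i + u)%N (i + j + u)%N = Hf A B i l D (i + u)%N (i + j + u)%N.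
      case: (eqVneq u 0%N) => [->|ne']; last by apply: GH'; apply/eqP; lia.
      rewrite /G !addn0 eqxx /tgt hjm /Hf (ltnW hi).
      have -> : cl q i (i + j) = j by rewrite /cl; lia.
      by rewrite (@n8 _ _ _ _ hj hi) natz addrA.
    have hg1 : (i + u <= i + j + u)%N by lia.
    have hg2 : (i + j + u < i + u + q)%N by lia.
    have := H2 hg1 hg2; rewrite /w; lia.
  rewrite !add0n.
  apply: (@acost_ins_run _ w X (Ys p q) (CX 0) L n (K - (i + j) - n)%N (i + j + n)%N).
  - rewrite size_Ys /n hsX; lia.
  - move=> b' _ hb'; rewrite wF2 /L KF; last by rewrite /n hsX in hb'; lia.
    have -> : (i + n = 2 * p + 1 - i)%N by rewrite /n hsX; lia.
    rewrite GH'; last by apply/eqP; lia.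
    rewrite GH'; last by apply/eqP; lia.
    rewrite !Hf_T //; ring.
  - have -> : (i + j + n + (K - (i + j) - n) = size (Ys p q))%N.
      by rewrite size_Ys /n hsX; lia.
    rewrite drop_size drop_oversize ?leqnn //=.
    rewrite /L size_Ys subnn.
    have -> : (i + n = 2 * p + 1 - i)%N by rewrite /n hsX; lia.
    rewrite GH'; last by apply/eqP; lia.
    by rewrite Hf_T.
have L00 : L 0%N 0%N = (size (Ys p q))%:R * F%:Z + ((p - i) * (q + 1))%:R * D%:Z
         + minAB A B i l.
  by rewrite /L /G addn0 eqxx subn0 size_Ys natz /tgt addrA.
rewrite -L00; split.
  by split; [exists s | exact: lb].
exists s; split; first by exists (L 0%N 0%N); split => //; exact: lb.
by rewrite /s !has_cat !has_nseq /= !andbF.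
Qed.
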